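(* Let $k$ be a difference field of characteristic $0$ and $R=k\{y_1,\ldots,y_n\}$. Every radical well-mixed monomial $\sigma$-ideal $I$ of $R$ is generated by finitely many monomials as a radical well-mixed $\sigma$-ideal, i.e. $I=\langle F\rangle_r$ for some finite set $F$ of monomials.
   Context: A difference field is a field $k$ with a ring endomorphism $\sigma$; $R=k\{y_1,\ldots,y_n\}$ is the polynomial ring over $k$ in the variables $\sigma^j(y_i)$, with $\sigma$ extended naturally. For $p=\sum_ic_ix^i\in\mathbb{N}[x]$ and $a\in R$, $a^p=\prod_i(\sigma^i(a))^{c_i}$; monomials are $\mathbf{y}^{\mathbf{u}}=y_1^{u_1}\cdots y_n^{u_n}$ with $\mathbf{u}\in\mathbb{N}[x]^n$. A $\sigma$-ideal is an ideal stable under $\sigma$; monomial if generated by monomials; well-mixed if $ab\in I\Rightarrow a\sigma(b)\in I$. $\langle F\rangle_r$ is the smallest radical well-mixed $\sigma$-ideal containing $F$. *)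

(* Defs.v *)
(* difference polynomial ring k{y_1..y_n} as the monoid
   algebra {malg k[cmonom ('I_n * nat)]}; the variable indexed by (i, j)
   stands for sigma^j(y_i). *)
From HB Require Import structures.
From mathcomp Require Import all_boot ssralg finmap.
From mathcomp.multinomials Require Import monalg.
Set Implicit Arguments. Unset Strict Implicit. Unset Printing Implicit Defensive.
Import GRing.Theory.
Local Open Scope ring_scope.

Section DiffPoly.
Variables (k : fieldType) (sigma : {rmorphism k -> k}) (n : nat).

Definition dvar := ('I_n * nat)%type.
(* monomials y^u, u in N[x]^n *)
Definition dmonom := cmonom dvar.
Definition dpoly := {malg k[dmonom]}.

Definition dX (v : dvar) : dpoly := << ucm v >>.
Definition dmon (m : dmonom) : dpoly := << m >>.

Definition dshift (m : dmonom) : dpoly :=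
  \prod_(v <- finsupp (m : {fsfun _ -> nat with 0%N})) dX (v.1, v.2.+1) ^+ (m v).

Definition dsigma (p : dpoly) : dpoly := mmap (fun c => (sigma c)%:MP) dshift p.

Implicit Types (I J : dpoly -> Prop) (S : dpoly -> Prop).

Definition is_ideal I :=
  [/\ I 0, (forall a b, I a -> I b -> I (a + b)) & (forall r a, I a -> I (r * a))].

Definition is_sigma_ideal I := is_ideal I /\ (forall a, I a -> I (dsigma a)).

Definition well_mixed I := forall a b, I (a * b) -> I (a * dsigma b).

Definition radical I := forall a m, I (a ^+ m.+1) -> I a.

Definition ideal_gen S (p : dpoly) : Prop :=
  forall J, is_ideal J -> (forall q, S q -> J q) -> J p.

Definition rwm_gen S (p : dpoly) : Prop :=
  forall J, is_sigma_ideal J -> well_mixed J -> radical J ->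
    (forall q, S q -> J q) -> J p.

Definition is_monomial_ideal I :=
  exists M : dmonom -> Prop,
    forall p, I p <-> ideal_gen (fun q => exists2 m, M m & q = dmon m) p.

End DiffPoly.

(* Main.v *)
Require Import Defs.
From HB Require Import structures.
From mathcomp Require Import all_boot ssralg finmap.
From mathcomp.multinomials Require Import monalg.
From Stdlib Require Import Classical.
Set Implicit Arguments. Unset Strict Implicit.
Import GRing.Theory.
Local Open Scope ring_scope.

Section Mon.
Variables (k : fieldType) (sigma : {rmorphism k -> k}) (n : nat).

Lemma dmonM (m1 m2 : dmonom n) : dmon k (mmul m1 m2) = dmon k m1 * dmon k m2.
Proof. by rewrite /dmon malgM_def fgmulUU mulr1. Qed.

Lemma dsigma_dX (i : 'I_n) (j : nat) : dsigma sigma (dX k (i, j)) = dX k (i, j.+1).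
Proof.
rewrite /dsigma /dX.
rewrite /mmap msuppU1 big_seq_fset1 mcoeffU1 eqxx /=.
rewrite rmorph1 mpolyC1E mul1r /dshift mdomU big_seq_fset1.
by rewrite cmUU expr1.
Qed.

Lemma dXE (v : dvar n) : dX k v = dmon k (ucm v).
Proof. by []. Qed.

Lemma cm_split (m : dmonom n) w : w \in finsupp m -> m = (mmul (ucm w) (divcm m (ucm w))).
Proof.
move=> wm; apply/eqP/cmP => i.
rewrite cmM divcmE cmU; case: eqP => [<-|_] //.
  by rewrite add1n subn1 prednK // lt0n cmE_neq0.
by rewrite add0n subn0.
Qed.

Lemma divcm_supp (f : dmonom n) v i : i \in finsupp (divcm f (ucm v)) -> i \in finsupp f.
Proof. by rewrite -!cmE_neq0 divcmE; apply: contra => /eqP ->. Qed.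

Variable J : dpoly k n -> Prop.
Hypothesis Jid : is_ideal J.
Hypothesis Jwm : well_mixed sigma J.

Lemma Jmul r a : J a -> J (r * a).
Proof. by case: Jid => _ _; apply. Qed.

Lemma Jmulr r a : J a -> J (a * r).
Proof. by move=> Ha; rewrite mulrC; apply: Jmul. Qed.

Lemma Jshift q (i : 'I_n) j j' : (j <= j')%N -> J (q * dX k (i, j)) -> J (q * dX k (i, j')).
Proof.
move=> Hjj' H; rewrite -(subnK Hjj'); elim: (j' - j)%N => [|d IH].
  by rewrite add0n.
by have := Jwm IH; rewrite dsigma_dX addSn.
Qed.

Lemma dmon1 : dmon k (@mone (dmonom n)) = 1.
Proof. exact: mpolyC1E. Qed.

Lemma Jdom (m : dmonom n) : forall d (f : dmonom n) p, mdeg f = d ->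
  (forall v, v \in finsupp f -> exists2 w, w \in finsupp m & (w.1 = v.1 /\ (v.2 <= w.2)%N)) ->
  J (p * dmon k f) -> J (p * dmon k m ^+ d).
Proof.
elim=> [|d IH] f p Hd Hsupp Hf.
  by move: Hf; rewrite (mdeg_eq0I Hd) dmon1 expr0.
have [v vf] : exists v, v \in finsupp f.
  apply: NNPP => H; move: Hd; rewrite mdegE big_seq big1 // => u uf.
  by exfalso; apply: H; exists u.
have Ef := cm_split vf.
set g := divcm f (ucm v) in Ef.
have Hg : mdeg g = d.
  by move: Hd; rewrite Ef mdegM mdegU add1n => -[].
have := IH g (p * dX k v) Hg.
have Hgs : forall u, u \in finsupp g -> exists2 w, w \in finsupp m & (w.1 = u.1 /\ (u.2 <= w.2)%N).
  by move=> u ug; apply: Hsupp; apply: divcm_supp ug.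
move=> /(_ Hgs).
have -> : p * dX k v * dmon k g = p * dmon k f by rewrite Ef dmonM dXE mulrA.
move=> /(_ Hf).
rewrite mulrAC.
have [w wm [w1 w2]] := Hsupp v vf.
case: v {vf Ef g Hg Hgs} w1 w2 => [vi vj] /= w1 w2.
move=> /(Jshift w2).
rewrite -w1 -surjective_pairing => H.
have := Jmulr (dmon k (divcm m (ucm w))) H.
by rewrite -mulrA dXE -dmonM -(cm_split wm) exprSr mulrA.
Qed.

End Mon.
Lemma headbehead (s : seq nat) k : size s = k.+1 -> s = head 0%N s :: behead s.
Proof. by case: s. Qed.

Lemma dickson (T : eqType) (n : nat) : forall (S : T -> Prop) (key : T -> seq nat),
  (forall t, S t -> size (key t) = n) ->
  exists F : seq T, (forall f, f \in F -> S f) /\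
    forall t, S t -> exists2 f, f \in F & all2 leq (key f) (key t).
Proof.
elim: n => [|n IH] S key Hs.
  case: (classic (exists t, S t)) => [[t0 Ht0]|Hno].
    exists [:: t0]; split; first by move=> f; rewrite inE => /eqP ->.
    move=> t Ht; exists t0; first by rewrite inE.
    by move: (Hs _ Ht0) (Hs _ Ht); case: (key t0) => //; case: (key t).
  exists [::]; split => // t Ht; exfalso; apply: Hno; by exists t.
have [B [BS HB]] : exists F : seq T, (forall f, f \in F -> S f) /\
    forall t, S t -> exists2 f, f \in F & all2 leq (behead (key f)) (behead (key t)).
  by apply: IH => t Ht; rewrite size_behead Hs.
set K := \max_(b <- B) head 0%N (key b).
have low : forall c, exists F : seq T, (forall f, f \in F -> S f) /\
    forall t, S t -> (head 0%N (key t) < c)%N -> exists2 f, f \in F & all2 leq (key f) (key t).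
  elim=> [|c [Fc [FcS HFc]]].
    by exists [::]; split.
  have [Bc [BcS HBc]] := IH (fun t => S t /\ head 0%N (key t) = c) (fun t => behead (key t))
     (fun t Ht => ltac:(by rewrite size_behead (Hs _ Ht.1))).
  exists (Bc ++ Fc); split.
    move=> f; rewrite mem_cat => /orP [/BcS []|/FcS] //.
  move=> t Ht; rewrite ltnS leq_eqVlt => /orP [/eqP Hc|Hlt].
    have [f fB Hf] := HBc t (conj Ht Hc).
    exists f; first by rewrite mem_cat fB.
    have [Sf Hfc] := BcS f fB.
    rewrite (headbehead (Hs _ Sf)) (headbehead (Hs _ Ht)) /= Hfc Hc leqnn.
    exact: Hf.
  have [f fF Hf] := HFc t Ht Hlt.
  by exists f; first by rewrite mem_cat fF orbT.
have [Fl [FlS HFl]] := low K.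
exists (B ++ Fl); split.
  by move=> f; rewrite mem_cat => /orP [/BS|/FlS].
move=> t Ht; case: (ltnP (head 0%N (key t)) K) => HK.
  have [f fF Hf] := HFl t Ht HK.
  by exists f; first by rewrite mem_cat fF orbT.
have [f fB Hf] := HB t Ht.
exists f; first by rewrite mem_cat fB.
rewrite (headbehead (Hs _ (BS _ fB))) (headbehead (Hs _ Ht)) /= Hf andbT.
apply: leq_trans HK; exact: (leq_bigmax_seq (P := xpredT)).
Qed.

Lemma all2_map_in (T : eqType) (F G : T -> nat) (s : seq T) :
  all2 leq (map F s) (map G s) -> forall x, x \in s -> (F x <= G x)%N.
Proof.
elim: s => [|y s IH] //= /andP [Hy Hs] x; rewrite inE => /orP [/eqP ->|xs] //.
exact: IH.
Qed.

Section Key.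
Variable n : nat.
Definition kv (m : dmonom n) (i : 'I_n) : nat :=
  (\max_(w <- finsupp m | w.1 == i) w.2.+1)%N.
Definition key (m : dmonom n) : seq nat := map (kv m) (enum 'I_n).

Lemma size_key m : size (key m) = n.
Proof. by rewrite size_map size_enum_ord. Qed.

Lemma key_dom (f m : dmonom n) : all2 leq (key f) (key m) ->
  forall v, v \in finsupp f -> exists2 w, w \in finsupp m & (w.1 = v.1 /\ (v.2 <= w.2)%N).
Proof.
move=> /all2_map_in H v vf.
have H1 : (v.2.+1 <= kv m v.1)%N.
  apply: leq_trans (H _ (mem_enum _ _)).
  exact: (leq_bigmax_seq (P := fun w : dvar n => w.1 == v.1) (F := fun w : dvar n => w.2.+1)).
case: (boolP (has (fun w : dvar n => (w.1 == v.1) && (v.2 <= w.2)%N) (finsupp m))).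
  by move=> /hasP [w wm /andP [/eqP w1 w2]]; exists w.
move=> /hasPn Hn; exfalso.
have : (kv m v.1 <= v.2)%N.
  apply/bigmax_leqP_seq => w wm /eqP w1.
  by have := Hn w wm; rewrite w1 eqxx /= ltnNge.
by rewrite leqNgt H1.
Qed.
End Key.

Theorem corollary5p6 (k : fieldType) (sigma : {rmorphism k -> k}) (n : nat)
  (char0 : [pchar k] =i pred0) (I : dpoly k n -> Prop) :
  is_sigma_ideal sigma I -> well_mixed sigma I -> radical I ->
  is_monomial_ideal I ->
  exists F : seq (dmonom n),
    forall p, I p <-> rwm_gen sigma (fun q => exists2 m, m \in F & q = @dmon k n m) p.
Proof.
move=> [Iid Is] Iwm Irad [M HM].
have [F [FS HF]] := @dickson _ n (fun m : dmonom n => I (dmon k m)) (@key n)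
   (fun t _ => size_key t).
exists F => p; split.
  move=> Ip J [JJid JJs] JJwm JJrad Hgen.
  apply: ((HM p).1 Ip J JJid) => q [m Mm ->].
  have Im : I (dmon k m).
    by apply/HM => J' _ HJ'; apply: HJ'; exists m.
  have [f fF Hf] := HF m Im.
  have Jf : J (dmon k f) by apply: Hgen; exists f.
  have := @Jdom k sigma n J JJid JJwm m (mdeg f) f 1 erefl (key_dom Hf).
  rewrite !mul1r => /(_ Jf) Hd.
  apply: (JJrad _ (mdeg f)).
  by rewrite exprS; apply: Jmul.
move=> H; apply: (H I (conj Iid Is) Iwm Irad) => q [m mF ->].
exact: FS.
Qed.
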